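(* Let $\{G^k\}_{k\ge0}$ be a $B$-strongly connected sequence of digraphs on $V=\{1,\dots,I\}$ and let each $\mathbf{A}^k=(a_{ij}^k)$ be compliant with $G^k$ and column stochastic (constant $\kappa>0$). For arbitrary perturbations $\boldsymbol\varepsilon_i^k\in\mathbb{R}^m$ and initial $\mathbf{x}^0=(\mathbf{x}_{(i)}^0)_{i=1}^I$, consider the perturbed condensed push-sum protocol: $\phi_{(i)}^0=1$ and, for all $i$ and $k\ge0$, $$\phi_{(i)}^{k+1}=\sum_{j=1}^Ia_{ij}^k\phi_{(j)}^k,\qquad \mathbf{x}_{(i)}^{k+1}=\frac{1}{\phi_{(i)}^{k+1}}\sum_{j=1}^Ia_{ij}^k\phi_{(j)}^k\mathbf{x}_{(j)}^k+\boldsymbol\varepsilon_i^k.$$ Then: (a) $\phi_{lb}\triangleq\inf_k\min_i\phi_{(i)}^k\ge\kappa^{2(I-1)B}$ and $\phi_{ub}\triangleq\sup_k\max_i\phi_{(i)}^k\le I-\kappa^{2(I-1)B}$; (b) for all $k\ge0$ and $i=1,\dots,I$, $$\Big\|\mathbf{x}_{(i)}^k-\frac1I\sum_{j=1}^I\phi_{(j)}^k\mathbf{x}_{(j)}^k\Big\|\le c\Big(\rho^k\|\mathbf{x}^0\|+\sum_{t=0}^{k-1}\rho^{k-1-t}\|\boldsymbol\varepsilon^t\|\Big),$$ where $\boldsymbol\varepsilon^t=(\boldsymbol\varepsilon_i^t)_{i=1}^I$, $\tilde\kappa\triangleq\kappa\,\phi_{lb}/\phi_{ub}$, $\rho\triangleq(1-\tilde\kappa^{(I-1)B})^{1/((I-1)B)}\in(0,1)$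 and $c\triangleq\frac{2I}{\rho}\cdot\frac{2(1+\tilde\kappa^{-(I-1)B})}{1-\tilde\kappa^{(I-1)B}}$.
   Context: A digraph at time $k$ is $G^k=(V,E^k)$ with edge $(j,i)\in E^k$ meaning $j$ can send to $i$. The sequence is $B$-strongly connected if there is an integer $B>0$ such that for every $k\ge0$ the digraph with edge set $\bigcup_{t=k}^{k+B-1}E^t$ is strongly connected. $\mathbf{A}^k$ is compliant with $G^k$ (constant $\kappa>0$) if $a_{ij}^k=0$ whenever $j\ne i$ and $(j,i)\notin E^k$, $a_{ij}^k\ge\kappa$ whenever $(j,i)\in E^k$, and $a_{ii}^k\ge\kappa$ for all $i$; it is column stochastic if $\mathbf{1}^T\mathbf{A}^k=\mathbf{1}^T$ (nonnegative entries). $\|\mathbf{x}^0\|$ is the Euclidean norm of the stacked vector. *)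

(* Defs.v *)
From Stdlib Require Export Reals Relations.
Open Scope R_scope.

Fixpoint rsum (n : nat) (f : nat -> R) : R :=
  match n with
  | O => 0
  | S n' => rsum n' f + f n'
  end.

Definition vnorm (m : nat) (v : nat -> R) : R :=
  sqrt (rsum m (fun l => (v l)^2)).

(* Euclidean norm of the stacked vector (y_(i))_{i<I}, each y_(i) in R^m *)
Definition snorm (I m : nat) (y : nat -> nat -> R) : R :=
  sqrt (rsum I (fun i => rsum m (fun l => (y i l)^2))).

(* Digraph sequence on V = {0,..,I-1}: E k j i means (j,i) in E^k,
   i.e. j can send to i at time k. *)
Definition union_edge (E : nat -> nat -> nat -> Prop) (I B k : nat) (j i : nat) : Prop :=
  (j < I)%nat /\ (i < I)%nat /\ exists t, (k <= t < k + B)%nat /\ E t j i.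

Definition strongly_connected_union (E : nat -> nat -> nat -> Prop) (I B k : nat) : Prop :=
  forall i j, (i < I)%nat -> (j < I)%nat -> clos_refl_trans nat (union_edge E I B k) i j.

Definition B_strongly_connected (E : nat -> nat -> nat -> Prop) (I B : nat) : Prop :=
  (0 < B)%nat /\ forall k, strongly_connected_union E I B k.

(* A k i j = a_ij^k *)
Definition compliant (E : nat -> nat -> nat -> Prop) (A : nat -> nat -> nat -> R)
  (I : nat) (kappa : R) : Prop :=
  forall k i j, (i < I)%nat -> (j < I)%nat ->
    (j <> i -> ~ E k j i -> A k i j = 0) /\
    (E k j i -> A k i j >= kappa) /\
    A k i i >= kappa.

Definition column_stochastic (A : nat -> nat -> nat -> R) (I : nat) : Prop :=
  forall k, (forall i j, (i < I)%nat -> (j < I)%nat -> 0 <= A k i j) /\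
            (forall j, (j < I)%nat -> rsum I (fun i => A k i j) = 1).

Definition is_inf (S : R -> Prop) (m : R) : Prop :=
  (forall y, S y -> m <= y) /\ (forall b, (forall y, S y -> b <= y) -> b <= m).

Definition is_sup (S : R -> Prop) (m : R) : Prop :=
  (forall y, S y -> y <= m) /\ (forall b, (forall y, S y -> y <= b) -> m <= b).

Definition phi_values (I : nat) (phi : nat -> nat -> R) (y : R) : Prop :=
  exists k i, (i < I)%nat /\ y = phi k i.

(* Main.v *)
Require Import Defs.
From Stdlib Require Import Reals.
From Stdlib Require Import Lra Lia Classical.
Open Scope R_scope.


Lemma rsum_ext n f g : (forall i, (i < n)%nat -> f i = g i) -> rsum n f = rsum n g.
Proof. induction n; simpl; intros H; auto. rewrite IHn by (intros; apply H; lia). rewrite H by lia. reflexivity. Qed.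

Lemma rsum_le n f g : (forall i, (i < n)%nat -> f i <= g i) -> rsum n f <= rsum n g.
Proof. induction n; simpl; intros H; [lra|]. assert (H1 := IHn (fun i Hi => H i ltac:(lia))). assert (H2 := H n ltac:(lia)). lra. Qed.

Lemma rsum_plus n f g : rsum n (fun i => f i + g i) = rsum n f + rsum n g.
Proof. induction n; simpl; [lra|]. rewrite IHn. lra. Qed.

Lemma rsum_scal n c f : rsum n (fun i => c * f i) = c * rsum n f.
Proof. induction n; simpl; [lra|]. rewrite IHn. lra. Qed.

Lemma rsum_const n c : rsum n (fun _ => c) = INR n * c.
Proof. induction n; simpl rsum; [simpl; lra|]. rewrite IHn, S_INR. lra. Qed.

Lemma rsum_nonneg n f : (forall i, (i < n)%nat -> 0 <= f i) -> 0 <= rsum n f.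
Proof. intros H. rewrite <- (Rmult_0_r (INR n)), <- rsum_const. apply rsum_le. auto. Qed.

Lemma rsum_ge_term n f i : (forall i, (i < n)%nat -> 0 <= f i) -> (i < n)%nat -> f i <= rsum n f.
Proof. induction n; simpl; intros H Hi; [lia|].
  destruct (Nat.eq_dec i n). subst. assert (0 <= rsum n f) by (apply rsum_nonneg; intros; apply H; lia). lra.
  assert (f i <= rsum n f) by (apply IHn; [intros; apply H; lia| lia]). assert (0 <= f n) by (apply H; lia). lra. Qed.

Lemma rsum_ge_two n f i j : (forall i, (i < n)%nat -> 0 <= f i) -> (i < n)%nat -> (j < n)%nat -> i <> j ->
  f i + f j <= rsum n f.
Proof. induction n; simpl; intros H Hi Hj Hij; [lia|].
  destruct (Nat.eq_dec i n). subst. assert (f j <= rsum n f) by (apply rsum_ge_term; [intros; apply H; lia| lia]). lra.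
  destruct (Nat.eq_dec j n). subst. assert (f i <= rsum n f) by (apply rsum_ge_term; [intros; apply H; lia| lia]). lra.
  assert (f i + f j <= rsum n f) by (apply IHn; [intros; apply H; lia| lia|lia|auto]). assert (0 <= f n) by (apply H; lia). lra. Qed.

Lemma rsum_swap n m f : rsum n (fun i => rsum m (fun j => f i j)) = rsum m (fun j => rsum n (fun i => f i j)).
Proof. induction n; simpl.
  - rewrite rsum_const. lra.
  - rewrite IHn, <- rsum_plus. reflexivity. Qed.

Lemma rsum_split a b f : rsum (a + b) f = rsum a f + rsum b (fun u => f (a + u)%nat).
Proof. induction b; simpl. rewrite Nat.add_0_r; lra. rewrite Nat.add_succ_r. simpl. rewrite IHb. lra. Qed.

Lemma rsum_le1_all n f i : (forall i, (i < n)%nat -> f i <= 1) -> (i < n)%nat -> rsum n f <= INR n - 1 + f i.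
Proof. induction n; simpl rsum; intros H Hi; [lia|]. rewrite S_INR.
  destruct (Nat.eq_dec i n). subst. assert (rsum n f <= INR n * 1) by (rewrite <- rsum_const; apply rsum_le; intros; apply H; lia). lra.
  assert (rsum n f <= INR n - 1 + f i) by (apply IHn; [intros; apply H; lia|lia]). assert (f n <= 1) by (apply H; lia). lra. Qed.

Lemma rsum_ind_incr n f g i : (forall i, (i < n)%nat -> f i = 1 -> g i = 1) ->
  (forall i, (i < n)%nat -> f i = 0 \/ f i = 1) -> (forall i, (i < n)%nat -> g i = 0 \/ g i = 1) ->
  (i < n)%nat -> f i = 0 -> g i = 1 -> rsum n g >= rsum n f + 1.
Proof.
  assert (Hle : forall n f g, (forall i, (i < n)%nat -> f i = 1 -> g i = 1) ->
     (forall i, (i < n)%nat -> f i = 0 \/ f i = 1) -> (forall i, (i < n)%nat -> g i = 0 \/ g i = 1) -> rsum n f <= rsum n g).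
  { intros n0 f0 g0 H1 H2 H3. apply rsum_le. intros j Hj. destruct (H2 j Hj) as [e|e]; rewrite e.
    destruct (H3 j Hj) as [e'|e']; rewrite e'; lra. rewrite (H1 j Hj e). lra. }
  induction n; simpl; intros H1 H2 H3 Hi Hf Hg; [lia|].
  destruct (Nat.eq_dec i n). subst.
  assert (rsum n f <= rsum n g) by (apply Hle; intros; [apply H1|apply H2|apply H3]; auto; lia). lra.
  assert (rsum n g >= rsum n f + 1) by (apply IHn; intros; [apply H1|apply H2|apply H3|..]; auto; lia).
  destruct (H2 n ltac:(lia)) as [e|e]; rewrite e. destruct (H3 n ltac:(lia)) as [e'|e']; rewrite e'; lra.
  rewrite (H1 n ltac:(lia) e). lra. Qed.


Lemma crossing (R : nat -> nat -> Prop) (P : nat -> Prop) a b :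
  clos_refl_trans nat R a b -> P a -> ~ P b -> exists x y, R x y /\ P x /\ ~ P y.
Proof.
  induction 1; intros Ha Hb.
  - eauto.
  - contradiction.
  - destruct (classic (P y)); eauto.
Qed.

Lemma ind01 (a b : R) : (if Rle_dec a b then 1 else 0) = 0 \/ (if Rle_dec a b then 1 else 0) = 1.
Proof. destruct (Rle_dec a b); auto. Qed.

Lemma reach (I B : nat) (E : nat->nat->nat->Prop) (M : nat->nat->nat->R) (d : R) (z : nat->nat->R) (k : nat) :
 0 <= d ->
 (forall k, strongly_connected_union E I B k) ->
 (forall t i j, (i<I)%nat -> (j<I)%nat -> 0 <= M t i j) ->
 (forall t i, (i<I)%nat -> M t i i >= d) ->
 (forall t i j, (i<I)%nat -> (j<I)%nat -> E t j i -> M t i j >= d) ->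
 (forall t i, (k <= t)%nat -> (i<I)%nat -> 0 <= z t i) ->
 (forall t i, (k <= t)%nat -> (i<I)%nat -> z (S t) i >= rsum I (fun j => M t i j * z t j)) ->
 forall i j, (i<I)%nat -> (j<I)%nat -> z (k + (I-1)*B)%nat i >= d^((I-1)*B) * z k j.
Proof.
  intros Hd HSC HM0 HMd HME Hz0 Hz i j Hi Hj.
  assert (Hpers : forall p t0 i, (k <= t0)%nat -> (i < I)%nat -> z (t0 + p)%nat i >= d^p * z t0 i).
  { induction p; intros t0 i0 Ht0 Hi0.
    - rewrite Nat.add_0_r. simpl. lra.
    - rewrite Nat.add_succ_r. 
      assert (H1 := Hz (t0+p)%nat i0 ltac:(lia) Hi0).
      assert (H2 : M (t0+p)%nat i0 i0 * z (t0+p)%nat i0 <= rsum I (fun j => M (t0+p)%nat i0 j * z (t0+p)%nat j)).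
      { apply (rsum_ge_term I (fun j => M (t0+p)%nat i0 j * z (t0+p)%nat j)); auto.
        intros; apply Rmult_le_pos; [apply HM0|apply Hz0]; auto; lia. }
      assert (H3 := HMd (t0+p)%nat i0 Hi0). assert (H4 := Hz0 (t0+p)%nat i0 ltac:(lia) Hi0).
      assert (H5 := IHp t0 i0 Ht0 Hi0).
      simpl. assert (d * z (t0+p)%nat i0 <= M (t0+p)%nat i0 i0 * z (t0+p)%nat i0) by (apply Rmult_le_compat_r; lra).
      assert (d * (d^p * z t0 i0) <= d * z (t0+p)%nat i0) by (apply Rmult_le_compat_l; lra). lra. }
  assert (Hedge : forall t i j, (k <= t)%nat -> (i<I)%nat -> (j<I)%nat -> E t j i -> z (S t) i >= d * z t j).
  { intros t i0 j0 Ht Hi0 Hj0 He.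
    assert (H1 := Hz t i0 Ht Hi0).
    assert (H2 : M t i0 j0 * z t j0 <= rsum I (fun j => M t i0 j * z t j)).
    { apply (rsum_ge_term I (fun j => M t i0 j * z t j)); auto.
      intros; apply Rmult_le_pos; [apply HM0|apply Hz0]; auto; lia. }
    assert (H3 := HME t i0 j0 Hi0 Hj0 He). assert (H4 := Hz0 t j0 Ht Hj0).
    assert (d * z t j0 <= M t i0 j0 * z t j0) by (apply Rmult_le_compat_r; lra). lra. }
  set (good := fun s i => d^(s*B) * z k j <= z (k + s*B)%nat i).
  set (ind := fun s i => if Rle_dec (d^(s*B) * z k j) (z (k + s*B)%nat i) then 1 else 0).
  assert (Hind1 : forall s i, good s i -> ind s i = 1).
  { intros s i0 H. unfold ind. destruct (Rle_dec _ _); auto. contradiction. }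
  assert (Hind0 : forall s i, ~ good s i -> ind s i = 0).
  { intros s i0 H. unfold ind. destruct (Rle_dec _ _); auto. contradiction. }
  assert (Hind01 : forall s i, ind s i = 0 \/ ind s i = 1) by (intros; apply ind01).
  assert (Hnext : forall s i, (i < I)%nat -> good s i -> good (S s) i).
  { intros s i0 Hi0 H. unfold good in *.
    replace (k + S s * B)%nat with ((k + s*B) + B)%nat by lia.
    assert (H1 := Hpers B (k + s*B)%nat i0 ltac:(lia) Hi0).
    replace (S s * B)%nat with (B + s*B)%nat by lia. rewrite pow_add.
    assert (0 <= d^B) by (apply pow_le; auto).
    assert (d^B * (d ^ (s*B) * z k j) <= d^B * z (k + s*B)%nat i0) by (apply Rmult_le_compat_l; auto). lra. }
  assert (Hgj : forall s, good s j).
  { induction s. unfold good; simpl; rewrite Nat.add_0_r; lra. apply Hnext; auto. }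
  assert (Hclaim : forall s, rsum I (ind s) >= INR (S s) \/ (forall i, (i < I)%nat -> good s i)).
  { induction s.
    - left. 
      assert (ind 0%nat j <= rsum I (ind 0%nat)) by (apply rsum_ge_term; auto; intros i0 _; destruct (Hind01 0%nat i0); lra).
      rewrite Hind1 in H by auto. simpl. lra.
    - destruct (classic (forall i, (i < I)%nat -> good s i)) as [Hall|Hnot].
      + right. intros. apply Hnext; auto.
      + destruct IHs as [Hc|Hc]; [|contradiction].
        apply not_all_ex_not in Hnot. destruct Hnot as [i0 Hi0].
        apply imply_to_and in Hi0. destruct Hi0 as [Hi0 Hng].
        destruct (crossing (union_edge E I B (k + s*B)) (fun i => (i < I)%nat /\ good s i) j i0
           (HSC (k + s*B)%nat j i0 Hj Hi0) (conj Hj (Hgj s)) ltac:(tauto)) as (j' & i' & Hu & [Hj' Hgj'] & Hni').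
        destruct Hu as (_ & Hi' & t & Ht & He).
        assert (Hgi' : good (S s) i').
        { unfold good in *.
          destruct (Nat.le_exists_sub (k + s*B) t ltac:(lia)) as [dd [Hdd _]].
          assert (Hd1 := Hpers dd (k + s*B)%nat j' ltac:(lia) Hj').
          replace (k + s*B + dd)%nat with t in Hd1 by lia.
          assert (Hd2 := Hedge t i' j' ltac:(lia) Hi' Hj' He).
          assert (Hd3 := Hpers (B - S dd)%nat (S t) i' ltac:(lia) Hi').
          replace (S t + (B - S dd))%nat with (k + S s * B)%nat in Hd3 by lia.
          replace (d ^ (S s * B)) with (d^(B - S dd) * (d * (d^dd * d^(s*B)))) by
            (replace (S s * B)%nat with ((B - S dd) + (1 + (dd + s*B)))%nat by lia; rewrite !pow_add; simpl pow; ring).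
          assert (0 <= d^dd) by (apply pow_le; auto).
          assert (0 <= d^(B - S dd)) by (apply pow_le; auto).
          assert (d^dd * (d^(s*B) * z k j) <= d^dd * z (k + s*B)%nat j') by (apply Rmult_le_compat_l; auto).
          assert (d * (d^dd * (d^(s*B) * z k j)) <= d * z t j') by (apply Rmult_le_compat_l; lra).
          assert (d^(B - S dd) * (d * (d^dd * (d^(s*B) * z k j))) <= d^(B - S dd) * z (S t) i') by (apply Rmult_le_compat_l; lra).
          lra. }
        left. assert (rsum I (ind (S s)) >= rsum I (ind s) + 1).
        { apply (rsum_ind_incr I (ind s) (ind (S s)) i').
          - intros i1 Hi1 e. apply Hind1. apply Hnext; auto. destruct (classic (good s i1)); auto. rewrite Hind0 in e; auto; lra.
          - intros; apply Hind01.
          - intros; apply Hind01.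
          - exact Hi'.
          - apply Hind0. tauto.
          - apply Hind1; exact Hgi'. }
        rewrite S_INR. lra. }
  destruct (Hclaim (I - 1)%nat) as [Hc|Hc].
  - assert (Hr := rsum_le1_all I (ind (I-1)%nat) i ltac:(intros i0 _; destruct (Hind01 (I-1)%nat i0); lra) Hi).
    replace (S (I-1)) with I in Hc by lia.
    assert (good (I-1)%nat i). { destruct (classic (good (I-1)%nat i)); auto. rewrite Hind0 in Hr; auto. lra. }
    unfold good in H. lra.
  - assert (H := Hc i Hi). unfold good in H. lra.
Qed.


Lemma Rabs_le_inv a b : Rabs a <= b -> -b <= a <= b.
Proof. unfold Rabs; destruct (Rcase_abs a); lra. Qed.

Lemma pow_le1 r n : 0 <= r <= 1 -> r ^ n <= 1.
Proof. intros H. induction n; simpl; [lra|]. assert (0 <= r^n) by (apply pow_le; lra).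
  assert (r * r^n <= 1 * 1) by (apply Rmult_le_compat; lra). lra. Qed.

Lemma pow_decr r a b : 0 <= r <= 1 -> (a <= b)%nat -> r ^ b <= r ^ a.
Proof. intros H Hab. replace b with (a + (b - a))%nat by lia. rewrite pow_add.
  assert (0 <= r^a) by (apply pow_le; lra). assert (r^(b-a) <= 1) by (apply pow_le1; lra).
  assert (r^a * r^(b-a) <= r^a * 1) by (apply Rmult_le_compat_l; lra). lra. Qed.

Definition Wd (I : nat) (s : nat -> nat -> R) k w :=
  exists Mx mn, Mx - mn <= w /\ forall j, (j < I)%nat -> mn <= s k j <= Mx.

Lemma Wd_mono I s k w w' : Wd I s k w -> w <= w' -> Wd I s k w'.
Proof. intros (Mx & mn & H1 & H2) H. exists Mx, mn. split; auto; lra. Qed.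

Lemma conv_bound I (W : nat -> R) (s : nat -> R) Mx mn :
  (forall j, (j < I)%nat -> 0 <= W j) -> rsum I W = 1 ->
  (forall j, (j < I)%nat -> mn <= s j <= Mx) ->
  mn <= rsum I (fun j => W j * s j) <= Mx.
Proof. intros H0 H1 H2. split.
  - replace mn with (rsum I (fun j => mn * W j)) by (rewrite rsum_scal, H1; ring).
    apply rsum_le. intros j Hj. rewrite Rmult_comm. apply Rmult_le_compat_l; auto. apply H2; auto.
  - replace Mx with (rsum I (fun j => Mx * W j)) by (rewrite rsum_scal, H1; ring).
    apply rsum_le. intros j Hj. rewrite (Rmult_comm Mx). apply Rmult_le_compat_l; auto. apply H2; auto.
Qed.

Section Cons.
Variables (I B : nat) (E : nat -> nat -> nat -> Prop) (W : nat -> nat -> nat -> R) (d : R)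
  (s eta : nat -> nat -> R) (e : nat -> R).
Hypothesis HW0 : forall t i j, (i < I)%nat -> (j < I)%nat -> 0 <= W t i j.
Hypothesis HWrow : forall t i, (i < I)%nat -> rsum I (W t i) = 1.
Hypothesis Hs : forall t i, (i < I)%nat -> s (S t) i = rsum I (fun j => W t i j * s t j) + eta t i.
Hypothesis Heta : forall t i, (i < I)%nat -> Rabs (eta t i) <= e t.

Lemma bnd_n k Mx mn : (forall j, (j < I)%nat -> mn <= s k j <= Mx) ->
  forall p j, (j < I)%nat -> mn - rsum p (fun u => e (k + u)%nat) <= s (k + p)%nat j <= Mx + rsum p (fun u => e (k + u)%nat).
Proof. intros H. induction p; intros j Hj.
  - rewrite Nat.add_0_r. simpl. specialize (H j Hj). lra.
  - rewrite Nat.add_succ_r. simpl rsum. rewrite Hs by auto.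
    assert (Hc := conv_bound I (W (k+p)%nat j) (s (k+p)%nat) (Mx + rsum p (fun u => e (k + u)%nat)) (mn - rsum p (fun u => e (k + u)%nat)) (fun j0 Hj0 => HW0 _ _ _ Hj Hj0) (HWrow _ _ Hj) IHp).
    assert (Ha := Heta (k+p)%nat j Hj). apply Rabs_le_inv in Ha. lra.
Qed.

Hypothesis Hd : 0 <= d.
Hypothesis HSC : forall k, strongly_connected_union E I B k.
Hypothesis HWd : forall t i, (i < I)%nat -> W t i i >= d.
Hypothesis HWE : forall t i j, (i < I)%nat -> (j < I)%nat -> E t j i -> W t i j >= d.
Hypothesis HI : (0 < I)%nat.
Hypothesis HdN : d ^ ((I-1)*B) <= 1.

Lemma block k w : Wd I s k w ->
  Wd I s (k + (I-1)*B)%nat ((1 - d^((I-1)*B)) * w + 2 * rsum ((I-1)*B) (fun u => e (k + u)%nat)).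
Proof.
  intros (Mx & mn & Hw & Hb).
  set (N := ((I-1)*B)%nat).
  set (Rs := fun t => rsum (t - k) (fun u => e (k + u)%nat)).
  assert (HR : forall t, (k <= t)%nat -> Rs (S t) = Rs t + e t).
  { intros t Ht. unfold Rs. replace (S t - k)%nat with (S (t - k)) by lia. simpl. replace (k + (t-k))%nat with t by lia. auto. }
  assert (Hbt : forall t j, (k <= t)%nat -> (j < I)%nat -> mn - Rs t <= s t j <= Mx + Rs t).
  { intros t j Ht Hj. unfold Rs. assert (Hx := bnd_n k Mx mn Hb (t-k) j Hj). replace (k + (t-k))%nat with t in Hx by lia; exact Hx. }
  assert (HWrow' : forall t i c, (i < I)%nat -> rsum I (fun j => W t i j * c) = c).
  { intros. rewrite (rsum_ext I _ (fun j => c * W t i j)) by (intros; ring). rewrite rsum_scal, HWrow; auto; ring. }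
  assert (Hlin1 : forall t i c, (i < I)%nat -> rsum I (fun j => W t i j * (c - s t j)) = c - rsum I (fun j => W t i j * s t j)).
  { intros. rewrite (rsum_ext I _ (fun j => W t i j * c + (- 1) * (W t i j * s t j))) by (intros; ring).
    rewrite rsum_plus, rsum_scal, HWrow' by auto. ring. }
  assert (Hlin2 : forall t i c, (i < I)%nat -> rsum I (fun j => W t i j * (s t j - c)) = rsum I (fun j => W t i j * s t j) - c).
  { intros. rewrite (rsum_ext I _ (fun j => W t i j * s t j + (- 1) * (W t i j * c))) by (intros; ring).
    rewrite rsum_plus, rsum_scal, HWrow' by auto. ring. }
  assert (Hz1 := reach I B E W d (fun t i => Mx + Rs t - s t i) k Hd HSC HW0 HWd HWE
    ltac:(intros t i Ht Hi; cbv beta; specialize (Hbt t i Ht Hi); lra)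
    ltac:(intros t i Ht Hi; cbv beta; rewrite HR, Hs by auto;
          rewrite (Hlin1 t i (Mx + Rs t) Hi);
          assert (Ha := Heta t i Hi); apply Rabs_le_inv in Ha; lra)).
  assert (Hz2 := reach I B E W d (fun t i => s t i - (mn - Rs t)) k Hd HSC HW0 HWd HWE
    ltac:(intros t i Ht Hi; cbv beta; specialize (Hbt t i Ht Hi); lra)
    ltac:(intros t i Ht Hi; cbv beta; rewrite HR, Hs by auto;
          rewrite (Hlin2 t i (mn - Rs t) Hi);
          assert (Ha := Heta t i Hi); apply Rabs_le_inv in Ha; lra)).
  simpl in Hz1, Hz2.
  assert (HRk : Rs k = 0) by (unfold Rs; rewrite Nat.sub_diag; reflexivity).
  assert (HRN : Rs (k + N)%nat = rsum N (fun u => e (k + u)%nat)) by (unfold Rs; f_equal; lia).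
  fold N in Hz1, Hz2. rewrite HRk, HRN in Hz1, Hz2.
  exists (Mx + rsum N (fun u => e (k + u)%nat) - d^N * (Mx - s k 0%nat)),
         (mn - rsum N (fun u => e (k + u)%nat) + d^N * (s k 0%nat - mn)).
  split.
  - assert (0 <= 1 - d^N) by (unfold N; lra).
    assert ((1 - d^N) * (Mx - mn) <= (1 - d^N) * w) by (apply Rmult_le_compat_l; auto). nra.
  - intros j Hj. specialize (Hz1 j 0%nat Hj HI). specialize (Hz2 j 0%nat Hj HI). lra.
Qed.

Variables (rho X : R).
Hypothesis Hrho : 0 < rho <= 1.
Hypothesis HrhoN : rho ^ ((I-1)*B) = 1 - d^((I-1)*B).
Hypothesis Hlam : 0 < 1 - d^((I-1)*B).
Hypothesis HN : (1 <= (I-1)*B)%nat.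
Hypothesis He0 : forall t, 0 <= e t.
Hypothesis HX : 0 <= X.
Hypothesis Hs0 : forall i, (i < I)%nat -> Rabs (s 0%nat i) <= X.

Theorem consensus k : Wd I s k ((2 / (1 - d^((I-1)*B))) * (rho ^ k * X + rsum k (fun t => rho ^ (k - 1 - t) * e t))).
Proof.
  set (N := ((I-1)*B)%nat) in *.
  set (C := 2 / (1 - d^N)).
  assert (HC : C * rho ^ N = 2) by (unfold C; rewrite HrhoN; field; lra).
  assert (HC0 : 0 <= C) by (unfold C; apply Rmult_le_pos; [lra|apply Rlt_le, Rinv_0_lt_compat; lra]).
  assert (Hsm : forall a, (a <= N)%nat -> 2 <= C * rho ^ a).
  { intros a Ha. rewrite <- HC. apply Rmult_le_compat_l; auto. apply pow_decr; auto. lra. }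
  induction k as [k IH] using (well_founded_induction Wf_nat.lt_wf).
  destruct (Nat.lt_ge_cases k N) as [Hk|Hk].
  - assert (H0 : forall j, (j < I)%nat -> -X <= s 0%nat j <= X) by (intros j Hj; apply Rabs_le_inv; auto).
    exists (X + rsum k (fun u => e (0 + u)%nat)), (-X - rsum k (fun u => e (0 + u)%nat)). split.
    + simpl. rewrite Rmult_plus_distr_l, <- rsum_scal.
      assert (2 * X <= C * rho^k * X) by (apply Rmult_le_compat_r; auto; apply Hsm; lia).
      assert (2 * rsum k (fun u => e u) <= rsum k (fun t => C * (rho ^ (k - 1 - t) * e t))).
      { rewrite <- rsum_scal. apply rsum_le. intros t Ht. rewrite <- Rmult_assoc. apply Rmult_le_compat_r; auto. apply Hsm. lia. }
      lra.
    + intros j Hj. assert (Hb := bnd_n 0%nat X (-X) H0 k j Hj). simpl in Hb. simpl. lra.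
  - destruct (Nat.le_exists_sub N k Hk) as [k' [Hk' _]]. subst k.
    assert (HW := block k' _ (IH k' ltac:(lia))). fold N in HW.
    eapply Wd_mono; [exact HW|].
    rewrite rsum_split.
    rewrite <- HrhoN. fold C.
    replace (rho ^ (k' + N)) with (rho ^ N * rho ^ k') by (rewrite pow_add; ring).
    rewrite (rsum_ext k' (fun t => rho ^ (k' + N - 1 - t) * e t) (fun t => rho ^ N * (rho ^ (k' - 1 - t) * e t))) by
      (intros t Ht; replace (k' + N - 1 - t)%nat with (N + (k' - 1 - t))%nat by lia; rewrite pow_add; ring).
    rewrite rsum_scal.
    assert (2 * rsum N (fun u => e (k' + u)%nat) <= C * rsum N (fun u => rho ^ (k' + N - 1 - (k' + u)) * e (k' + u)%nat)).
    { rewrite <- !rsum_scal. apply rsum_le. intros u Hu. rewrite <- Rmult_assoc. apply Rmult_le_compat_r; auto. apply Hsm. lia. }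
    lra.
Qed.
End Cons.


Lemma rsum_abs n f : Rabs (rsum n f) <= rsum n (fun i => Rabs (f i)).
Proof. induction n; simpl. rewrite Rabs_R0; lra. assert (H := Rabs_triang (rsum n f) (f n)). lra. Qed.

Lemma rsum_sq_zero n a l : rsum n (fun i => a i ^ 2) = 0 -> (l < n)%nat -> a l = 0.
Proof. intros H Hl. assert (H1 : a l ^ 2 <= rsum n (fun i => a i ^ 2)) by
  (apply (rsum_ge_term n (fun i => a i ^ 2)); auto; intros; apply pow2_ge_0). nra. Qed.

Lemma cs m a b : Rabs (rsum m (fun l => a l * b l)) <= vnorm m a * vnorm m b.
Proof.
  unfold vnorm. set (A2 := rsum m (fun l => a l ^ 2)). set (B2 := rsum m (fun l => b l ^ 2)).
  assert (HA : 0 <= A2) by (apply rsum_nonneg; intros; apply pow2_ge_0).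
  assert (HB : 0 <= B2) by (apply rsum_nonneg; intros; apply pow2_ge_0).
  assert (Hs1 := sqrt_sqrt A2 HA). assert (Hs2 := sqrt_sqrt B2 HB).
  assert (Hp1 := sqrt_pos A2). assert (Hp2 := sqrt_pos B2).
  destruct (Req_dec A2 0) as [HA0|HA0].
  { rewrite (rsum_ext m _ (fun _ => 0)) by (intros l Hl; rewrite (rsum_sq_zero m a l HA0 Hl); ring).
    rewrite rsum_const, Rmult_0_r, Rabs_R0. nra. }
  destruct (Req_dec B2 0) as [HB0|HB0].
  { rewrite (rsum_ext m _ (fun _ => 0)) by (intros l Hl; rewrite (rsum_sq_zero m b l HB0 Hl); ring).
    rewrite rsum_const, Rmult_0_r, Rabs_R0. nra. }
  set (al := sqrt A2) in *. set (be := sqrt B2) in *.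
  assert (0 < al) by (destruct Hp1; auto; exfalso; apply HA0; rewrite <- Hs1, <- H; ring).
  assert (0 < be) by (destruct Hp2; auto; exfalso; apply HB0; rewrite <- Hs2, <- H0; ring).
  assert (Hk : rsum m (fun l => 2 * (al * be) * Rabs (a l * b l)) <= rsum m (fun l => be^2 * a l ^ 2 + al^2 * b l ^2)).
  { apply rsum_le. intros l _. rewrite Rabs_mult.
    assert (Ha := Rabs_pos (a l)). assert (Hb := Rabs_pos (b l)).
    rewrite <- (pow2_abs (a l)), <- (pow2_abs (b l)).
    assert (Hsq : 0 <= (be * Rabs (a l) - al * Rabs (b l))^2) by apply pow2_ge_0.
    nra. }
  rewrite rsum_scal, rsum_plus, !rsum_scal in Hk. fold A2 B2 in Hk.
  assert (Hab := rsum_abs m (fun l => a l * b l)).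
  assert (HX : 2 * (al * be) * Rabs (rsum m (fun l => a l * b l)) <= 2 * (al*be) * (al*be)).
  { apply Rle_trans with (2 * (al * be) * rsum m (fun l => Rabs (a l * b l))).
    apply Rmult_le_compat_l; auto. nra. nra. }
  assert (0 < al * be) by nra. nra.
Qed.

Lemma exists_ge1 n f : (0 < n)%nat -> rsum n f >= INR n -> exists i, (i < n)%nat /\ f i >= 1.
Proof.
  induction n; intros Hn H; [lia|]. simpl rsum in H. rewrite S_INR in H.
  destruct (Rge_dec (f n) 1) as [Hf|Hf]. exists n; split; auto.
  destruct n. simpl in H. lra.
  destruct IHn as [i [Hi Hfi]]. lia. lra. exists i; split; auto.
Qed.

Lemma Wd_conv I s k w p i : Wd I s k w -> (forall j, (j < I)%nat -> 0 <= p j) -> rsum I p = 1 -> (i < I)%nat ->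
  Rabs (s k i - rsum I (fun j => p j * s k j)) <= w.
Proof. intros (Mx & mn & Hw & Hb) Hp Hp1 Hi.
  assert (Hc := conv_bound I p (s k) Mx mn Hp Hp1 Hb). assert (Hi' := Hb i Hi).
  apply Rabs_le. lra. Qed.


Theorem mainTheorem11
  (I B m : nat) (kappa : R)
  (E : nat -> nat -> nat -> Prop) (A : nat -> nat -> nat -> R)
  (eps : nat -> nat -> nat -> R)        (* eps k i l = l-th component of eps_i^k *)
  (phi : nat -> nat -> R)               (* phi k i = phi_(i)^k *)
  (x : nat -> nat -> nat -> R)          (* x k i l = l-th component of x_(i)^k *)
  (HI : (2 <= I)%nat)
  (Hkappa : 0 < kappa)
  (HB : B_strongly_connected E I B)
  (HA : compliant E A I kappa)
  (HAcs : column_stochastic A I)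
  (Hphi0 : forall i, (i < I)%nat -> phi 0%nat i = 1)
  (Hphi : forall k i, (i < I)%nat ->
     phi (S k) i = rsum I (fun j => A k i j * phi k j))
  (Hx : forall k i l, (i < I)%nat -> (l < m)%nat ->
     x (S k) i l = / phi (S k) i * rsum I (fun j => A k i j * phi k j * x k j l)
                   + eps k i l) :
  (exists lb ub, is_inf (phi_values I phi) lb /\ is_sup (phi_values I phi) ub) /\
  forall phi_lb phi_ub,
    is_inf (phi_values I phi) phi_lb ->
    is_sup (phi_values I phi) phi_ub ->
    let N := ((I - 1) * B)%nat in
    let kt := kappa * phi_lb / phi_ub in
    let rho := Rpower (1 - kt ^ N) (/ INR N) in
    let c := (2 * INR I / rho) * (2 * (1 + / (kt ^ N)) / (1 - kt ^ N)) in
    (* (a) *)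
    phi_lb >= kappa ^ (2 * N) /\ phi_ub <= INR I - kappa ^ (2 * N) /\
    (* rho in (0,1) *)
    0 < rho < 1 /\
    (* (b) *)
    (forall k i, (i < I)%nat ->
       vnorm m (fun l => x k i l - / INR I * rsum I (fun j => phi k j * x k j l))
       <= c * (rho ^ k * snorm I m (x 0%nat)
               + rsum k (fun t => rho ^ (k - 1 - t) * snorm I m (eps t)))).
Proof.
  destruct HB as [HB0 HSC].
  assert (HA0 : forall t i j, (i < I)%nat -> (j < I)%nat -> 0 <= A t i j) by (intros; apply HAcs; auto).
  assert (HAc : forall t j, (j < I)%nat -> rsum I (fun i => A t i j) = 1) by (intros; apply HAcs; auto).
  assert (HAd : forall t i, (i < I)%nat -> A t i i >= kappa) by (intros t i Hi; apply (HA t i i Hi Hi)).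
  assert (HAE : forall t i j, (i < I)%nat -> (j < I)%nat -> E t j i -> A t i j >= kappa) by (intros t i j Hi Hj; apply (HA t i j Hi Hj)).
  set (N := ((I - 1) * B)%nat).
  assert (HN1 : (1 <= N)%nat) by (unfold N; nia).
  assert (Hk2 : kappa <= /2).
  { assert (Hc01 := HSC 0%nat 0%nat 1%nat ltac:(lia) ltac:(lia)).
    assert (Hn10 : ~ (1 = 0)%nat) by lia.
    destruct (crossing (union_edge E I B 0) (fun i => i = 0%nat) 0 1 Hc01 eq_refl Hn10)
      as (j' & i' & (Hj' & Hi' & t & _ & He) & Hx0 & Hy0). subst j'.
    assert (H2 := rsum_ge_two I (fun i => A t i 0%nat) i' 0%nat ltac:(intros; apply HA0; lia) Hi' Hj' Hy0).
    rewrite HAc in H2 by auto. assert (H3 := HAE t i' 0%nat Hi' Hj' He). assert (H4 := HAd t 0%nat Hj'). simpl in H2. lra. }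
  assert (Hp0 : forall k i, (i < I)%nat -> 0 <= phi k i).
  { induction k; intros i Hi. rewrite Hphi0; auto; lra. rewrite Hphi by auto. apply rsum_nonneg. intros j Hj. apply Rmult_le_pos; auto. }
  assert (Hsum : forall k, rsum I (phi k) = INR I).
  { induction k.
    - rewrite (rsum_ext I _ (fun _ => 1)) by (intros; apply Hphi0; auto). rewrite rsum_const. ring.
    - rewrite (rsum_ext I _ (fun i => rsum I (fun j => A k i j * phi k j))) by (intros; apply Hphi; auto).
      rewrite rsum_swap. rewrite (rsum_ext I _ (fun j => phi k j * rsum I (fun i => A k i j))).
      2:{ intros j Hj. rewrite <- rsum_scal. apply rsum_ext. intros; ring. }
      rewrite <- IHk. apply rsum_ext. intros j Hj. rewrite HAc by auto. ring. }
  assert (Hpk : forall k i, (i < I)%nat -> phi k i >= kappa ^ k).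
  { induction k; intros i Hi. rewrite Hphi0 by auto. simpl; lra. rewrite Hphi by auto.
    assert (H1 : A k i i * phi k i <= rsum I (fun j => A k i j * phi k j)) by
      (apply (rsum_ge_term I (fun j => A k i j * phi k j)); auto; intros; apply Rmult_le_pos; auto).
    assert (H2 := HAd k i Hi). assert (H3 := IHk i Hi). simpl.
    assert (0 <= kappa ^ k) by (apply pow_le; lra).
    assert (kappa * kappa ^ k <= A k i i * phi k i) by (apply Rmult_le_compat; lra). lra. }
  set (lb0 := kappa ^ (2 * N)).
  assert (Hlb0 : 0 < lb0) by (apply pow_lt; auto).
  assert (Hlb : forall k i, (i < I)%nat -> phi k i >= lb0).
  { intros k i Hi. destruct (Nat.lt_ge_cases k N) as [Hk|Hk].
    - assert (H := Hpk k i Hi). assert (kappa ^ (2*N) <= kappa ^ k) by (apply pow_decr; [lra|lia]). unfold lb0; lra.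
    - destruct (Nat.le_exists_sub N k Hk) as [k' [Hk' _]]. subst k.
      destruct (exists_ge1 I (phi k') ltac:(lia) ltac:(rewrite Hsum; lra)) as [j [Hj Hpj]].
      assert (H := reach I B E A kappa phi k' ltac:(lra) HSC HA0 HAd HAE
        ltac:(intros; apply Hp0; auto) ltac:(intros; rewrite Hphi by auto; lra) i j Hi Hj).
      fold N in H.
      assert (kappa ^ (2*N) <= kappa ^ N) by (apply pow_decr; [lra|lia]).
      assert (0 <= kappa ^ N) by (apply pow_le; lra).
      assert (kappa ^ N * 1 <= kappa ^ N * phi k' j) by (apply Rmult_le_compat_l; lra).
      unfold lb0. lra. }
  assert (Hub : forall k i, (i < I)%nat -> phi k i <= INR I - lb0).
  { intros k i Hi. set (j := if Nat.eq_dec i 0 then 1%nat else 0%nat).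
    assert (Hj : (j < I)%nat) by (unfold j; destruct (Nat.eq_dec i 0); lia).
    assert (Hij : i <> j) by (unfold j; destruct (Nat.eq_dec i 0); lia).
    assert (H := rsum_ge_two I (phi k) i j (Hp0 k) Hi Hj Hij). rewrite Hsum in H.
    assert (H' := Hlb k j Hj). lra. }
  split.
  {
    assert (Hne : exists y, phi_values I phi y) by (exists (phi 0%nat 0%nat); exists 0%nat, 0%nat; split; auto; lia).
    destruct (completeness (phi_values I phi)) as [ub [Hub1 Hub2]].
    { exists (INR I). intros y (k & i & Hi & ->). specialize (Hub k i Hi). lra. }
    { auto. }
    destruct (completeness (fun y => phi_values I phi (- y))) as [mlb [Hl1 Hl2]].
    { exists 0. intros y (k & i & Hi & Hy). specialize (Hlb k i Hi). lra. }
    { destruct Hne as [y Hy]. exists (-y). cbv beta. rewrite Ropp_involutive. auto. }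
    exists (- mlb), ub. split; split.
    - intros y Hy. assert (Hl1y : -y <= mlb) by (apply Hl1; cbv beta; rewrite Ropp_involutive; auto). lra.
    - intros b Hb. assert (mlb <= -b). { apply Hl2. intros y Hy. specialize (Hb (-y) Hy). lra. } lra.
    - exact Hub1.
    - exact Hub2. }
  intros phi_lb phi_ub [Hi1 Hi2] [Hs1 Hs2] N' kt rho c.
  change N' with N in *. clear N'.
  assert (Hval : forall k i, (i < I)%nat -> phi_lb <= phi k i <= phi_ub).
  { intros k i Hi. split; [apply Hi1|apply Hs1]; exists k, i; split; auto. }
  assert (Hplb : phi_lb >= lb0) by (apply Rle_ge, Hi2; intros y (k & i & Hi & ->); specialize (Hlb k i Hi); lra).
  assert (Hpub : phi_ub <= INR I - lb0) by (apply Hs2; intros y (k & i & Hi & ->); apply Hub; auto).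
  assert (Hlu : phi_lb <= phi_ub) by (destruct (Hval 0%nat 0%nat ltac:(lia)); lra).
  split; [exact Hplb|]. split; [exact Hpub|].
  assert (Hpl0 : 0 < phi_lb) by lra.
  assert (Hpu0 : 0 < phi_ub) by lra.
  assert (Hkt0 : 0 < kt) by (unfold kt; apply Rmult_lt_0_compat; [nra| apply Rinv_0_lt_compat; lra]).
  assert (Hktk : kt <= kappa).
  { assert (kt * phi_ub = kappa * phi_lb) by (unfold kt; field; lra). nra. }
  assert (HktN0 : 0 < kt ^ N) by (apply pow_lt; auto).
  assert (HktN1 : kt ^ N <= kt) by (rewrite <- (pow_1 kt) at 2; apply pow_decr; [lra|lia]).
  set (lam := 1 - kt ^ N) in *.
  assert (Hlam : 0 < lam < 1) by (unfold lam; lra).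
  assert (HNpos : 0 < INR N) by (apply lt_0_INR; lia).
  assert (Hrho0 : 0 < rho) by (unfold rho, Rpower; apply exp_pos).
  assert (Hrho1 : rho < 1).
  { unfold rho, Rpower. rewrite <- exp_0. apply exp_increasing.
    assert (ln lam < 0) by (rewrite <- ln_1; apply ln_increasing; lra).
    assert (0 < / INR N) by (apply Rinv_0_lt_compat; auto). nra. }
  assert (HrhoN : rho ^ N = lam).
  { rewrite <- Rpower_pow by auto. unfold rho. rewrite Rpower_mult, Rinv_l by lra. apply Rpower_1. lra. }
  split; [lra|].
  set (W := fun t i j => A t i j * phi t j / phi (S t) i).
  assert (Hps : forall t i, (i < I)%nat -> 0 < phi t i) by (intros t i Hi; specialize (Hlb t i Hi); lra).
  assert (HW0 : forall t i j, (i < I)%nat -> (j < I)%nat -> 0 <= W t i j).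
  { intros t i j Hi Hj. unfold W. apply Rmult_le_pos; [apply Rmult_le_pos; auto| apply Rlt_le, Rinv_0_lt_compat; auto]. }
  assert (HWrow : forall t i, (i < I)%nat -> rsum I (W t i) = 1).
  { intros t i Hi. unfold W. rewrite (rsum_ext I _ (fun j => / phi (S t) i * (A t i j * phi t j))) by (intros; unfold Rdiv; ring).
    rewrite rsum_scal, <- Hphi by auto. field. specialize (Hps (S t) i Hi). lra. }
  assert (Hfrac : forall t i j, (i < I)%nat -> (j < I)%nat -> A t i j >= kappa -> W t i j >= kt).
  { intros t i j Hi Hj Ha. unfold W, kt. destruct (Hval t j Hj). destruct (Hval (S t) i Hi).
    assert (Hq := Hps (S t) i Hi).
    assert (kappa * phi_lb <= A t i j * phi t j) by (apply Rmult_le_compat; lra).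
    assert (/ phi_ub <= / phi (S t) i) by (apply Rinv_le_contravar; lra).
    unfold Rdiv. apply Rle_ge. apply Rmult_le_compat; try lra. nra. left; apply Rinv_0_lt_compat; lra. }
  assert (HWd : forall t i, (i < I)%nat -> W t i i >= kt) by (intros; apply Hfrac; auto).
  assert (HWE : forall t i j, (i < I)%nat -> (j < I)%nat -> E t j i -> W t i j >= kt) by (intros; apply Hfrac; auto).
  assert (Hxw : forall t j l, (j < I)%nat -> (l < m)%nat -> x (S t) j l = rsum I (fun j' => W t j j' * x t j' l) + eps t j l).
  { intros t j l Hj Hl. rewrite Hx by auto. f_equal. rewrite <- rsum_scal. apply rsum_ext. intros j' _. unfold W.
    field. specialize (Hps (S t) j Hj). lra. }
  intros k i Hi.
  set (v := fun l => x k i l - / INR I * rsum I (fun j => phi k j * x k j l)).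
  set (nv := vnorm m v).
  assert (Hnv0 : 0 <= nv) by apply sqrt_pos.
  set (sv := fun t j => rsum m (fun l => v l * x t j l)).
  set (eta := fun t j => rsum m (fun l => v l * eps t j l)).
  set (e := fun t => nv * snorm I m (eps t)).
  set (X := nv * snorm I m (x 0%nat)).
  assert (Hcomp : forall (y : nat -> nat -> R) j, (j < I)%nat -> vnorm m (y j) <= snorm I m y).
  { intros y j Hj. unfold vnorm, snorm. apply sqrt_le_1_alt.
    apply (rsum_ge_term I (fun i => rsum m (fun l => y i l ^ 2))); auto.
    intros; apply rsum_nonneg; intros; apply pow2_ge_0. }
  assert (Hcs : forall (y : nat -> nat -> R) j, (j < I)%nat -> Rabs (rsum m (fun l => v l * y j l)) <= nv * snorm I m y).
  { intros y j Hj. eapply Rle_trans. apply (cs m v (y j)). apply Rmult_le_compat_l; auto. }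
  assert (Hs : forall t j, (j < I)%nat -> sv (S t) j = rsum I (fun j' => W t j j' * sv t j') + eta t j).
  { intros t j Hj. unfold sv, eta.
    rewrite (rsum_ext m _ (fun l => rsum I (fun j' => W t j j' * (v l * x t j' l)) + v l * eps t j l)).
    2:{ intros l Hl. rewrite Hxw by auto. rewrite Rmult_plus_distr_l, <- rsum_scal. f_equal. apply rsum_ext. intros; ring. }
    rewrite rsum_plus, rsum_swap. f_equal. apply rsum_ext. intros j' _. rewrite rsum_scal. reflexivity. }
  assert (Heta : forall t j, (j < I)%nat -> Rabs (eta t j) <= e t) by (intros; apply Hcs; auto).
  assert (Hs0 : forall j, (j < I)%nat -> Rabs (sv 0%nat j) <= X) by (intros; apply Hcs; auto).
  assert (Hsn : forall y, 0 <= snorm I m y) by (intros; apply sqrt_pos).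
  assert (He0 : forall t, 0 <= e t) by (intros; apply Rmult_le_pos; auto).
  assert (HX0 : 0 <= X) by (apply Rmult_le_pos; auto).
  assert (HWd' := consensus I B E W kt sv eta e HW0 HWrow Hs Heta ltac:(lra) HSC HWd HWE ltac:(lia)
     ltac:(fold N; lra) rho X ltac:(lra) ltac:(fold N; rewrite HrhoN; reflexivity) ltac:(fold N; lra) ltac:(fold N; lia) He0 HX0 Hs0 k).
  fold N in HWd'. fold lam in HWd'.
  assert (Hconv := Wd_conv I sv k _ (fun j => phi k j / INR I) i HWd'
     ltac:(intros j Hj; unfold Rdiv; apply Rmult_le_pos; [apply Hp0; auto|apply Rlt_le, Rinv_0_lt_compat, lt_0_INR; lia])
     ltac:(rewrite (rsum_ext I _ (fun j => / INR I * phi k j)) by (intros; unfold Rdiv; ring); rewrite rsum_scal, Hsum; field; apply not_0_INR; lia) Hi).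
  assert (Hnv2 : sv k i - rsum I (fun j => phi k j / INR I * sv k j) = nv * nv).
  { unfold nv, vnorm. rewrite sqrt_sqrt by (apply rsum_nonneg; intros; apply pow2_ge_0).
    assert (E1 : rsum I (fun j => phi k j / INR I * sv k j) = rsum m (fun l => v l * (/ INR I * rsum I (fun j => phi k j * x k j l)))).
    { unfold sv. rewrite (rsum_ext I _ (fun j => rsum m (fun l => phi k j / INR I * (v l * x k j l)))) by (intros; rewrite rsum_scal; reflexivity).
      rewrite rsum_swap. apply rsum_ext. intros l _. rewrite <- !rsum_scal. apply rsum_ext. intros; unfold Rdiv; ring. }
    rewrite E1. unfold sv.
    rewrite (rsum_ext m (fun l => v l ^ 2) (fun l => v l * x k i l + (-1) * (v l * (/ INR I * rsum I (fun j => phi k j * x k j l))))) by (intros; unfold v; ring).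
    rewrite rsum_plus, rsum_scal. ring. }
  cbv beta in Hconv. rewrite Hnv2 in Hconv.
  set (F := 2 / lam * (rho ^ k * snorm I m (x 0%nat) + rsum k (fun t => rho ^ (k - 1 - t) * snorm I m (eps t)))).
  assert (HwF : 2 / lam * (rho ^ k * X + rsum k (fun t => rho ^ (k - 1 - t) * e t)) = nv * F).
  { unfold F, X, e. rewrite (rsum_ext k _ (fun t => nv * (rho ^ (k - 1 - t) * snorm I m (eps t)))) by (intros; ring).
    rewrite rsum_scal. ring. }
  rewrite HwF in Hconv.
  assert (Hsum0 : 0 <= rho ^ k * snorm I m (x 0%nat) + rsum k (fun t => rho ^ (k - 1 - t) * snorm I m (eps t))).
  { apply Rplus_le_le_0_compat. apply Rmult_le_pos; auto; apply pow_le; lra.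
    apply rsum_nonneg; intros; apply Rmult_le_pos; auto; apply pow_le; lra. }
  assert (HF0 : 0 <= F) by (unfold F; apply Rmult_le_pos; auto; unfold Rdiv; apply Rmult_le_pos; [lra|apply Rlt_le, Rinv_0_lt_compat; lra]).
  assert (Hnv : nv <= F).
  { destruct (Req_dec nv 0) as [H0|H0]. lra. assert (0 < nv) by lra.
    assert (Habs : nv * nv <= nv * F) by (rewrite <- (Rabs_right (nv * nv)) by nra; auto).
    apply (Rmult_le_reg_l nv); auto. }
  assert (HI2 : 2 <= INR I) by (replace 2 with (INR 2) by (simpl; ring); apply le_INR; auto).
  assert (Hinv : 0 < / kt ^ N) by (apply Rinv_0_lt_compat; auto).
  assert (Hc : c = 2 / lam * (2 * INR I * (1 + / kt ^ N) / rho)) by (unfold c; fold lam; field; lra).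
  assert (Hq : 1 <= 2 * INR I * (1 + / kt ^ N) / rho).
  { assert (HQ : rho <= 2 * INR I * (1 + / kt ^ N)) by nra.
    unfold Rdiv. apply Rle_trans with (rho * / rho); [right; field; lra|].
    apply Rmult_le_compat_r; auto. apply Rlt_le, Rinv_0_lt_compat; lra. }
  assert (Hlam2 : 0 <= 2 / lam) by (unfold Rdiv; apply Rmult_le_pos; [lra|apply Rlt_le, Rinv_0_lt_compat; lra]).
  apply Rle_trans with F; auto. unfold F. rewrite Hc.
  apply Rmult_le_compat_r; auto.
  rewrite <- (Rmult_1_r (2 / lam)) at 1. apply Rmult_le_compat_l; auto.
Qed.
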